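(* Let $H$ be a tree and $Q$ a subtree of $H$ with at least one edge. Then $Q$ is a good subgraph of $H$ if and only if no vertex of $N_H[V_Q]$ is a leaf of $H$ and the subgraph of $H$ induced by $N_H[V_Q]$ is the corona of $Q$, that is, $N_H[V_Q]\cap L_H=\emptyset$ and $H[N_H[V_Q]]=Q\circ K_1$.
   Context: Graphs are finite. A leaf is a vertex of degree one; $L_H$ is the set of leaves of $H$; $N_H[X]$ is the closed neighborhood of a vertex set $X$. The corona $Q\circ K_1$ is obtained from $Q$ by attaching one pendant edge (to a new leaf) at each vertex of $Q$; the condition $H[N_H[V_Q]]=Q\circ K_1$ means that the subgraph induced by $N_H[V_Q]$ consists of $Q$ together with, for each vertex $v$ of $Q$, exactly one neighbor of $v$ outside $V_Q$, these neighbors being distinct and pairwise nonadjacent. Good subgraph: Let $Q$ be a subgraph of $H$ without isolated vertices, and $E_Q^-$ the set of edges of $H$ not in $Q$ incident with at least one vertex of $Q$. $Q$ is a good subgraph of $H$ if there exist a set of edges $E$ with $E_Q^-\subseteq E\subseteq E_H\setminus E_Q$ and an orientation $A_E$ of the edges of $E$ (where $d^+(x)$, $d^-(x)$ denote the numbers of arcs of $A_E$ leaving, resp. entering $x$, and $d_H(x)$ is the degree in $H$) such that the arcs of $A_E$ form a family $\mathcal P=\{P_x: x\in V_Q\}$ of oriented paths indexed by the vertices of $Q$ with: (i) every vertex $v$ of $Q$ is the initial vertex of exactly one path of $\mathcal P$, and $d^+(v)=1$, $d^-(v)=d_H(v)-d_Q(v)-1$; (ii) if $x$ is an inner vertex of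 a path of $\mathcal P$, then $d^+(x)=1$ and $d^-(x)=d_H(x)-1$; (iii) if $x$ is an end vertex of a path of $\mathcal P$, then $d^-(x)<d_H(x)$. *)

(* Defs.v *)
(* Simple graphs on a finType T as symmetric irreflexive
   relations e; edges are 2-element sets [set x; y]. *)
From mathcomp Require Import all_boot.
Set Implicit Arguments. Unset Strict Implicit. Unset Printing Implicit Defensive.

Section Defs.
Variable T : finType.

Definition connected_on (V : {set T}) (adj : rel T) : Prop :=
  forall x y, x \in V -> y \in V ->
    exists p : seq T, [&& path adj x p, last x p == y & all (fun z => z \in V) p].

Definition acyclic_on (V : {set T}) (adj : rel T) : Prop :=
  ~ exists c : seq T,
      [&& 2 < size c, uniq c, all (fun z => z \in V) c & cycle adj c].

Definition is_tree (V : {set T}) (adj : rel T) : Prop :=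
  connected_on V adj /\ acyclic_on V adj.

Definition adjE (EQ : {set {set T}}) : rel T := fun x y => [set x; y] \in EQ.

Definition is_subtree (e : rel T) (VQ : {set T}) (EQ : {set {set T}}) : Prop :=
  [/\ forall s, s \in EQ ->
        exists x y, [/\ e x y, x \in VQ, y \in VQ & s = [set x; y]],
      is_tree VQ (adjE EQ) & EQ != set0].

Definition deg (e : rel T) (x : T) : nat := #|[set y | e x y]|.
Definition degE (EQ : {set {set T}}) (x : T) : nat := #|[set y | adjE EQ x y]|.
Definition outdeg (A : rel T) (x : T) : nat := #|[set y | A x y]|.
Definition indeg (A : rel T) (x : T) : nat := #|[set y | A y x]|.

Definition leaf (e : rel T) (x : T) : bool := deg e x == 1.

Definition closed_nbhd (e : rel T) (V : {set T}) : {set T} :=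
  V :|: [set y | [exists x in V, e x y]].

Definition arc_in (u w : T) (s : seq T) : Prop :=
  exists s1 s2, s = s1 ++ u :: w :: s2.

Definition inner (y : T) (s : seq T) : Prop :=
  exists s1 s2, [/\ s1 != [::], s2 != [::] & s = s1 ++ y :: s2].

(* Good subgraph. The orientation A_E is the arc relation A (E is the set of
   edges {x,y} with A x y or A y x); P x is the oriented path x :: P x. *)
Definition good_subgraph (e : rel T) (VQ : {set T}) (EQ : {set {set T}}) : Prop :=
  exists (A : rel T) (P : T -> seq T),
  [/\
      forall x y, A x y -> e x y && ([set x; y] \notin EQ),
      forall x y, ~~ (A x y && A y x) &
      forall x y, e x y -> [set x; y] \notin EQ -> (x \in VQ) || (y \in VQ) ->
        A x y || A y x] /\
  [/\
      forall x, x \in VQ -> [&& P x != [::], path A x (P x) & uniq (x :: P x)],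
      forall u w, A u w -> exists2 x, x \in VQ & arc_in u w (x :: P x) &

      forall v, v \in VQ -> outdeg A v = 1 /\ indeg A v = deg e v - degE EQ v - 1] /\
  [/\
      forall x y, x \in VQ -> inner y (x :: P x) ->
        outdeg A y = 1 /\ indeg A y = deg e y - 1 &
      forall x y, x \in VQ -> (y == x) || (y == last x (P x)) ->
        indeg A y < deg e y].

(* H[N_H[VQ]] = Q o K1, written out literally *)
Definition corona_induced (e : rel T) (VQ : {set T}) (EQ : {set {set T}}) : Prop :=
  [/\
      forall x y, x \in VQ -> y \in VQ -> e x y -> [set x; y] \in EQ,
      forall v, v \in VQ -> #|[set w | e v w & w \notin VQ]| = 1,
      forall v v' w, v \in VQ -> v' \in VQ -> w \notin VQ -> e v w -> e v' w -> v = v' &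
      forall u w, u \in closed_nbhd e VQ -> w \in closed_nbhd e VQ ->
        u \notin VQ -> w \notin VQ -> ~~ e u w].

End Defs.

(* Main.v *)
Require Import Defs.
From mathcomp Require Import all_boot.
Set Implicit Arguments. Unset Strict Implicit. Unset Printing Implicit Defensive.


Section Aux.
Variable T : finType.
Variable e : rel T.
Hypothesis esym : symmetric e.
Hypothesis eirr : irreflexive e.
Hypothesis acyc : acyclic_on [set: T] e.

Lemma chain_arc (A : rel T) x s s1 a b s2 :
  x :: s = s1 ++ a :: b :: s2 -> path A x s -> A a b.
Proof.
case: s1 => [|z s1] /= [-> ->]; first by case/andP.
by rewrite cat_path => /andP[_] /= /andP[_] /andP[].
Qed.

Lemma deg2 x a b : e x a -> e x b -> a != b -> deg e x != 1.
Proof.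
move=> ha hb nab; rewrite /deg.
have : #|[set a; b]| <= #|[set y | e x y]|.
  by apply: subset_leq_card; apply/subsetP => y; rewrite !inE => /orP[]/eqP->.
by rewrite cards2 nab => h; apply/eqP => h1; rewrite h1 in h.
Qed.

Lemma dircycle (A : rel T) (Ae : forall x y, A x y -> e x y)
  (Aa : forall x y, ~~ (A x y && A y x)) a s :
  path A a s -> uniq (a :: s) -> A (last a s) a -> False.
Proof.
case: s => [|b [|c s]] /=.
- by move=> _ _ /Ae; rewrite eirr.
- rewrite andbT => hab _ hba.
  by move: (Aa a b); rewrite hab hba.
- move=> hp hu hl; apply: acyc; exists [:: a, b, c & s].
  apply/and4P; split => //; first by apply/allP => z; rewrite inE.
  rewrite /cycle rcons_path; apply/andP; split.
    by apply: (@sub_path _ A); [move=> x y /Ae | exact: hp].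
  exact: Ae hl.
Qed.
End Aux.



Section Q.
Variable T : finType.
Variable e : rel T.
Hypothesis esym : symmetric e.
Hypothesis eirr : irreflexive e.
Hypothesis acyc : acyclic_on [set: T] e.
Variables (VQ : {set T}) (EQ : {set {set T}}).
Hypothesis hQ : is_subtree e VQ EQ.

Lemma edgeQ x y : [set x; y] \in EQ -> [/\ x \in VQ, y \in VQ & e x y].
Proof.
case: hQ => hE _ _ /hE [a [b [hab ha hb hs]]].
have hxs : x \in [set x; y] by rewrite !inE eqxx.
have hys : y \in [set x; y] by rewrite !inE eqxx orbT.
have has : a \in [set x; y] by rewrite hs !inE eqxx.
have hbs : b \in [set x; y] by rewrite hs !inE eqxx orbT.
rewrite hs !inE in hxs hys.
rewrite !inE in has hbs.
case/orP: hxs => /eqP ?; case/orP: hys => /eqP ?; subst x y.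
- by move: hbs; rewrite orbb => /eqP hba; move: hab; rewrite hba eirr.
- by split.
- by split; rewrite // esym.
- by move: has; rewrite orbb => /eqP hba; move: hab; rewrite -hba eirr.
Qed.

Lemma adjE_e x y : adjE EQ x y -> e x y.
Proof. by case/edgeQ. Qed.

Lemma Qnbr v : v \in VQ -> exists y, adjE EQ v y.
Proof.
move=> hv; case: hQ => hE [hc _] /set0Pn [s /hE [a [b [hab ha hb _]]]].
have hne : a != b by apply: contraTneq hab => ->; rewrite eirr.
pose t := if v == a then b else a.
have htv : t != v.
  rewrite /t; case: (v =P a) => [->|hva]; first by rewrite eq_sym.
  by apply/eqP => h; apply: hva; rewrite h.
have htQ : t \in VQ by rewrite /t; case: ifP.
case: (hc v t hv htQ) => [[|y p]] /and3P [hp hl _].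
  by move: hl htv => /= /eqP ->; rewrite eqxx.
by exists y; case/andP: hp.
Qed.

Lemma Qcycle u v r : u \in VQ -> v \in VQ -> path e u (rcons r v) ->
  all (fun z => z \notin VQ) r -> uniq (u :: rcons r v) ->
  (r != [::]) || ([set u; v] \notin EQ) -> False.
Proof.
move=> hu hv hp hr huq hcase.
case: hQ => _ [hc _] _.
case: (hc v u hv hu) => p /and3P [hpp /eqP hl hall].
case: (shortenP hpp) hl => p' hp' hu' hsub hl.
have huv : u != v.
  by apply: contraTneq huq => ->; rewrite /= mem_rcons inE eqxx.
case/lastP: p' hp' hu' hsub hl => [|p'' z] hp' hu' hsub hl.
  by move: hl huv => /= ->; rewrite eqxx.
rewrite last_rcons in hl; subst z.
have hp''Q : forall z, z \in p'' -> z \in VQ.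
  move=> z hz; have : z \in p by apply: hsub; rewrite mem_rcons inE hz orbT.
  by move/(allP hall).
apply: acyc; exists (u :: rcons r v ++ p'').
apply/and4P; split.
- move: hcase; case: r {hp hr huq} => [|x r] /=; last by rewrite size_cat /= size_rcons.
  case: p'' hp' hu' hsub hp''Q => [|x p''] //= hp' _ _ _.
  by rewrite andbT /adjE setUC in hp'; rewrite hp'.
- rewrite (_ : u :: rcons r v ++ p'' = (u :: rcons r v) ++ p'') // cat_uniq huq /=.
  move: hu'; rewrite /= rcons_uniq => /and3P [hnv hnu hu'']; rewrite hu'' andbT.
  apply/hasPn => z hz; rewrite inE negb_or mem_rcons inE negb_or.
  apply/and3P; split.
  + by apply: contraNneq hnu => <-.
  + by apply: contraNneq hnv => <-; rewrite mem_rcons inE hz orbT.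
  + by apply/negP => /(allP hr); rewrite hp''Q.
- by apply/allP => z; rewrite inE.
- rewrite /cycle rcons_cat cat_path hp last_rcons /=.
  by apply: (@sub_path _ (adjE EQ)) hp' => x y /adjE_e.
Qed.
End Q.



Section Fwd.
Variable T : finType.
Variable e : rel T.
Hypothesis esym : symmetric e.
Hypothesis eirr : irreflexive e.
Hypothesis acyc : acyclic_on [set: T] e.
Variables (VQ : {set T}) (EQ : {set {set T}}).
Hypothesis hQ : is_subtree e VQ EQ.
Variables (A : rel T) (P : T -> seq T).
Hypothesis hA : forall x y, A x y -> e x y && ([set x; y] \notin EQ).
Hypothesis hAa : forall x y, ~~ (A x y && A y x).
Hypothesis hAE : forall x y, e x y -> [set x; y] \notin EQ -> (x \in VQ) || (y \in VQ) ->
        A x y || A y x.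
Hypothesis hP : forall x, x \in VQ -> [&& P x != [::], path A x (P x) & uniq (x :: P x)].
Hypothesis hArc : forall u w, A u w -> exists2 x, x \in VQ & arc_in u w (x :: P x).
Hypothesis hi : forall v, v \in VQ -> outdeg A v = 1 /\ indeg A v = deg e v - degE EQ v - 1.
Hypothesis hiii : forall x y, x \in VQ -> (y == x) || (y == last x (P x)) ->
        indeg A y < deg e y.

Lemma Ae x y : A x y -> e x y.
Proof. by case/hA/andP. Qed.

Lemma inpred h n : h \notin VQ -> A h n -> exists p, A p h.
Proof.
move=> hh /hArc [x hx [s1 [s2 hs]]].
case/lastP: s1 hs => [|s1 p] hs.
  by case: hs => hxh; rewrite -hxh hx in hh.
rewrite cat_rcons in hs; exists p; apply: (chain_arc hs).
by case/and3P: (hP hx).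
Qed.

Lemma noInArc v0 w0 : v0 \in VQ -> w0 \notin VQ -> A w0 v0 -> False.
Proof.
move=> hv0 hw0 hwv.
have claim : forall n, exists h c, [/\ h \notin VQ, all (fun z => z \notin VQ) c,
   uniq (h :: c), path A h (rcons c v0) & n <= size c].
  elim => [|n [h [c [hh hc hu hp hn]]]].
    by exists w0, [::]; split => //=; rewrite hwv.
  have hall : forall z, z \in h :: c -> z \notin VQ.
    by move=> z; rewrite inE => /orP [/eqP -> //| /(allP hc)].
  have [nx hnx] : exists nx, A h nx.
    by case: c {hc hu hall hn} hp => [|y c] /= /andP [hn _]; eexists; exact: hn.
  have [p hph] := inpred hh hnx.
  have hv0c : v0 \notin h :: c by apply/negP => /hall; rewrite hv0.
  case hpQ: (p \in VQ).
    case: (p =P v0) => [hpv|hpv].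
      subst p; exfalso; apply: (dircycle eirr acyc Ae hAa (a := v0) (s := h :: c)).
      + by rewrite /= hph; move: hp; rewrite rcons_path => /andP[].
      + by rewrite cons_uniq hv0c hu.
      + by move: hp; rewrite rcons_path => /andP[].
    exfalso; apply: (Qcycle esym eirr acyc hQ (u := p) (v := v0) (r := h :: c)) => //.
    + apply: (@sub_path _ A); first by move=> x y /Ae.
      by rewrite rcons_cons /= hph hp.
    + by rewrite /= hh hc.
    + rewrite cons_uniq rcons_uniq hv0c hu andbT mem_rcons inE negb_or.
      rewrite andbT; apply/andP; split; first exact/eqP.
      by apply/negP => /hall; rewrite hpQ.
  case: (boolP (p \in h :: c)) => hpc.
    exfalso; move: hpc; rewrite inE => /orP [/eqP hph' | hpc].
      by move: hph; rewrite hph' => /Ae; rewrite eirr.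
    case/splitPr: hpc hp hu => c1 c2 hp hu.
    apply: (dircycle eirr acyc Ae hAa (a := h) (s := rcons c1 p)).
    + move: hp; rewrite rcons_cat cat_path /= => /and3P [h1 h2 _]; by rewrite rcons_path h1 h2.
    + rewrite (_ : h :: c1 ++ p :: c2 = (h :: rcons c1 p) ++ c2) ?cat_uniq in hu.
        by case/andP: hu.
      by rewrite /= cat_rcons.
    + by rewrite last_rcons.
  exists p, (h :: c); split. all: try by rewrite hpQ. all: try by rewrite /= hh hc. all: try by rewrite cons_uniq hpc hu. + by rewrite rcons_cons /= hph. + by []. 


have [h [c [_ _ hu _ hn]]] := claim #|T|.
have : size (h :: c) <= #|T| by rewrite -(card_uniqP hu); apply: max_card.
by rewrite /= ltnNge hn.
Qed.

Lemma corona1 x y : x \in VQ -> y \in VQ -> e x y -> [set x; y] \in EQ.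
Proof.
move=> hx hy hxy; apply/negPn/negP => hn.
apply: (Qcycle esym eirr acyc hQ (u := x) (v := y) (r := [::])) => //=.
- by rewrite hxy.
- by rewrite inE andbT; apply: contraTneq hxy => ->; rewrite eirr.
Qed.

Lemma fwd_main : (forall x, x \in closed_nbhd e VQ -> ~~ leaf e x) /\ corona_induced e VQ EQ.
Proof.
have edgeQout : forall v w, w \notin VQ -> [set v; w] \notin EQ.
  by move=> v w hw; apply/negP => /(edgeQ esym eirr hQ) [_ hwQ _]; rewrite hwQ in hw.
split; last split.
- move=> x; rewrite /closed_nbhd /leaf !inE; case hxQ: (x \in VQ) => /=.
    case: (Qnbr eirr hQ hxQ) => y hy.
    case: (hi hxQ) => /eqP /cards1P [w hw] _.
    have : w \in [set y | A x y] by rewrite hw inE.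
    rewrite inE => hxw.
    move=> _; apply: (deg2 (adjE_e esym eirr hQ hy) (Ae hxw)).
    apply: contraTneq hy => ->; rewrite /adjE.
    by case/andP: (hA hxw) => _ /negbTE ->.
  case/existsP => v /andP [hv hvx].
  have hor : (v \in VQ) || (x \in VQ) by rewrite hv.
  case/orP: (hAE hvx (edgeQout _ _ (negbT hxQ)) hor) => [hA'|hA'].
    case: (hArc hA') => y hy [s1 [s2 hs]].
    case: s2 hs => [|t s2] hs.
      have hl : last y (P y) = x by move/(congr1 (last y)): hs; rewrite last_cat /=.
      have hl2 : (x == y) || (x == last y (P y)) by rewrite hl eqxx orbT.
      have := hiii hy hl2.
      move=> hlt; apply/eqP => hd; move: hlt; rewrite hd ltnS leqn0 cards_eq0 => /eqP h0.
      have : v \in [set y | A y x] by rewrite inE.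
      by rewrite h0 inE.
    rewrite -cat_rcons in hs.
    have hxt : A x t by apply: (chain_arc hs); case/and3P: (hP hy).
    apply: (deg2 (e := e) (a := v) (b := t)); first by rewrite esym.
      exact: Ae hxt.
    by apply/eqP => hvt; subst t; move: (hAa v x); rewrite hA' hxt.
  by exfalso; apply: (noInArc hv (negbT hxQ) hA').
- exact: corona1.
- move=> v hv.
  have -> : [set w | e v w & w \notin VQ] = [set y | A v y].
    apply/setP => w; rewrite !inE; apply/andP/idP.
      case=> hvw hw.
      have hor : (v \in VQ) || (w \in VQ) by rewrite hv.
      case/orP: (hAE hvw (edgeQout _ _ hw) hor) => // hwv.
      by exfalso; apply: (noInArc hv hw hwv).
    move=> hvw; have /andP [he hn] := hA hvw; split => //.
    by apply/negP => hwQ; rewrite (corona1 hv hwQ he) in hn.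
  by case: (hi hv).
- move=> v v' w hv hv' hw hvw hv'w; apply/eqP; apply/negPn/negP => hne.
  apply: (Qcycle esym eirr acyc hQ (u := v) (v := v') (r := [:: w])) => //=.
  + by rewrite hvw esym hv'w.
  + by rewrite hw.
  + rewrite !inE !negb_or hne andbT /= andbT; apply/andP; split.
      by apply: contraNneq hw => <-.
    by apply: contraNneq hw => ->.
- move=> u w; rewrite /closed_nbhd !inE => hu hw hu' hw'.
  rewrite (negbTE hu') in hu; rewrite (negbTE hw') in hw.
  case/existsP: hu => a /andP [ha hau]; case/existsP: hw => b /andP [hb hbw].
  apply/negP => huw.
  case: (a =P b) => [hab|hab].
    subst b; apply: acyc; exists [:: a; u; w].
    rewrite /= hau huw (esym w a) hbw /= !inE !negb_or andbT.
    have -> : a != u by apply: contraNneq hu' => <-.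
    have -> : a != w by apply: contraNneq hw' => <-.
    have huw2 : u != w by apply: contraTneq huw => ->; rewrite eirr.
    by rewrite huw2.
  apply: (Qcycle esym eirr acyc hQ (u := a) (v := b) (r := [:: u; w])) => //=.
  + by rewrite hau huw (esym w b) hbw.
  + by rewrite hu' hw'.
  + rewrite !inE !negb_or andbT.
    have -> : a != u by apply: contraNneq hu' => <-.
    have -> : a != w by apply: contraNneq hw' => <-.
    have -> : u != w by apply: contraTneq huw => ->; rewrite eirr.
    have -> : u != b by apply: contraNneq hu' => ->.
    have -> : w != b by apply: contraNneq hw' => ->.
    by rewrite (introN eqP hab).
Qed.
End Fwd.



Section Bwd.
Variable T : finType.
Variable e : rel T.
Hypothesis esym : symmetric e.
Hypothesis eirr : irreflexive e.
Variables (VQ : {set T}) (EQ : {set {set T}}).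
Hypothesis hQ : is_subtree e VQ EQ.
Hypothesis hleaf : forall x, x \in closed_nbhd e VQ -> ~~ leaf e x.
Hypothesis hcor : corona_induced e VQ EQ.

Definition Ab : rel T := fun x y => [&& x \in VQ, y \notin VQ & e x y].
Definition wsel x := odflt x [pick w | e x w & w \notin VQ].
Definition Pb x := [:: wsel x].

Lemma uniq_out v w : v \in VQ -> e v w -> w \notin VQ ->
  [set w' | e v w' & w' \notin VQ] = [set w].
Proof.
move=> hv hvw hw; case: hcor => _ h2 _ _.
have /eqP /cards1P [a ha] := h2 v hv.
have : w \in [set w' | e v w' & w' \notin VQ] by rewrite inE hvw hw.
by rewrite ha inE => /eqP <-.
Qed.

Lemma wselP v : v \in VQ -> e v (wsel v) && (wsel v \notin VQ).
Proof.
move=> hv; rewrite /wsel; case: pickP => [w //|h0].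
case: hcor => _ h2 _ _; have := h2 v hv.
have -> : [set w | e v w & w \notin VQ] = set0 by apply/setP => w; rewrite !inE h0.
by rewrite cards0.
Qed.

Lemma bwd_main : good_subgraph e VQ EQ.
Proof.
case: hcor => c1 c2 c3 c4.
have notEQ : forall x y, y \notin VQ -> [set x; y] \notin EQ.
  by move=> x y hy; apply/negP => /(edgeQ esym eirr hQ) [_ hyQ _]; rewrite hyQ in hy.
exists Ab, Pb; split; [split | split; [split | split]].
- move=> x y /and3P [hx hy hxy]; by rewrite hxy notEQ.
- move=> x y; rewrite /Ab; apply/negP => /andP [/and3P [hx _ _] /and3P [_ hx' _]].
  by rewrite hx in hx'.
- move=> x y hxy hn; rewrite /Ab hxy (esym y x) hxy !andbT.
  case hx: (x \in VQ); case hy: (y \in VQ) => //= _.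
  by rewrite (c1 x y hx hy hxy) in hn.
- move=> x hx; case/andP: (wselP hx) => h1 h2; rewrite /= /Ab hx h1 h2 /= andbT inE.
  by apply: contraNneq h2 => <-.
- move=> u w /and3P [hu hw huw]; exists u => //; exists [::], [::].
  rewrite /Pb /wsel; case: pickP => [w' /andP [h1 h2]|h0] /=.
    have := uniq_out hu h1 h2; have : w \in [set w' | e u w' & w' \notin VQ] by rewrite inE huw hw.
    by move=> + hs; rewrite hs inE => /eqP ->.
  by move: (h0 w); rewrite huw hw.
- move=> v hv; split.
    rewrite /outdeg -(c2 v hv); apply: eq_card => w; by rewrite !inE /Ab hv /= andbC.
  have -> : indeg Ab v = 0.
    apply/eqP; rewrite cards_eq0; apply/eqP; apply/setP => w; rewrite !inE /Ab hv /=.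
    by rewrite andbF.
  apply/eqP; rewrite eq_sym subn_eq0 leq_subLR addn1.
  rewrite /deg /degE -addn1 -(c2 v hv).
  apply: leq_trans (leq_card_setU _ _).
  apply: subset_leq_card; apply/subsetP => y; rewrite !inE => hvy.
  case hy: (y \in VQ); last by rewrite hvy orbT.
  by rewrite /adjE (c1 v y hv hy hvy).
- move=> x y hx [s1 [s2 [hs1 hs2 hs]]].
  have := congr1 size hs; rewrite size_cat /=.
  case: s1 hs1 {hs} => [|? s1] // _; case: s2 hs2 => [|? s2] // _.
  by move=> /= h; exfalso; move: h; rewrite addSn addnS => -[]; rewrite addnS.
- move=> x y hx /orP [/eqP ->|].
    have -> : indeg Ab x = 0.
      apply/eqP; rewrite cards_eq0; apply/eqP; apply/setP => w; rewrite !inE /Ab hx /=.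
      by rewrite andbF.
    by case/andP: (wselP hx) => h1 _; rewrite /deg lt0n cards_eq0; apply/set0Pn; exists (wsel x); rewrite inE.
  rewrite /= => /eqP ->; case/andP: (wselP hx) => h1 h2.
  have hin : indeg Ab (wsel x) <= 1.
    apply: leq_trans (_ : #|[set x]| <= 1); last by rewrite cards1.
    apply: subset_leq_card; apply/subsetP => u; rewrite !inE => /and3P [hu _ hu'].
    by apply/eqP; apply: (c3 u x (wsel x)).
  have hd : 0 < deg e (wsel x).
    by rewrite /deg lt0n cards_eq0; apply/set0Pn; exists x; rewrite inE esym.
  have hnl : ~~ leaf e (wsel x).
    apply: hleaf; rewrite /closed_nbhd !inE; apply/orP; right.
    by apply/existsP; exists x; rewrite hx h1.
  move: hnl; rewrite /leaf => hnl.
  apply: (leq_trans (_ : _ < 2)); first by rewrite ltnS.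
  by move: hd hnl; case: (deg e (wsel x)) => [|[|n]].
Qed.
End Bwd.

Theorem proposition7p3 (T : finType) (e : rel T) (VQ : {set T}) (EQ : {set {set T}}) :
  symmetric e -> irreflexive e ->
  is_tree [set: T] e -> is_subtree e VQ EQ ->
  good_subgraph e VQ EQ <->
  ((forall x, x \in closed_nbhd e VQ -> ~~ leaf e x) /\ corona_induced e VQ EQ).
Proof.
move=> hsym hirr [_ hacyc] hQ; split.
  case=> A [P [[h1 h2 h3] [[h4 h5 h6] [h7 h8]]]].
  exact: (fwd_main hsym hirr hacyc hQ h1 h2 h3 h4 h5 h6 h8).
by case=> hl hc; exact: (bwd_main hsym hirr hQ hl hc).
Qed.
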